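(* Let $\lambda>0$, $p\in(0,1)$, $\theta\in(0,1)$. Let $\rho$ be a random variable taking finitely many values $q_1,\dots,q_K\in[0,M_1]$ (some constant $M_1<\infty$) with $P(\rho=q_j)=\mu_j>0$, $\sum_j\mu_j=1$. For each $n\ge1$ let $G_n$ be the Erdős–Rényi graph $G(n,p)$ on $A_n=\{0,\dots,n-1\}$ ($i\sim j$ if the edge is kept), let $\{\rho(i)\}_{i\ge0}$ be i.i.d. copies of $\rho$ independent of the graphs, and let $\{X^{(n)}_t\}_{t\ge0}$ be the SIR process on $G_n$ with states $\{0,1,-1\}^{A_n}$: state $-1$ is permanent; a vertex $i$ in state $0$ at time $t$ jumps to $1$ at rate $\frac{\lambda}{n}\sum_{j}\rho(i)\rho(j)\mathbf{1}_{\{j\sim i,X_t(j)=1\}}$; a vertex in state $1$ jumps to $-1$ at rate $1$. The initial states $X^{(n)}_0(i)$ are i.i.d. (independent of graph and weights) with $P(X^{(n)}_0(0)=1)=\theta=1-P(X^{(n)}_0(0)=0)$. For $1\le j\le K$ let $S^{(n)}_t(j)=\mathrm{card}\{i: X^{(n)}_t(i)=0,\rho(i)=q_j\}$ and $I^{(n)}_t(j)=\mathrm{card}\{i: X^{(n)}_t(i)=1,\rho(i)=q_j\}$, and for $1\le j,l\le K$ let $L^{(n)}_t(j,l)$ be the number of edges of $G_n$ joining a vertex that is susceptible (state $0$) with weight $q_j$ at time $t$ to a vertex that is infective (state $1$) with weight $q_l$ at time $t$. Then for any $1\le j,l\le K$ and $t\ge0$, $$\lim_{n\to\infty}\frac{\sup_{0\le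 u\le t}\big|L^{(n)}_u(j,l)-p\,S^{(n)}_u(j)\,I^{(n)}_u(l)\big|}{n^2}=0$$ in probability. *)

(* Defs.v *)
From HB Require Import structures.
From mathcomp Require Import all_boot all_order all_algebra.
From mathcomp Require Import all_classical all_reals all_analysis.
Set Implicit Arguments. Unset Strict Implicit. Unset Printing Implicit Defensive.
Import Order.TTheory GRing.Theory Num.Theory.
Local Open Scope classical_set_scope.
Local Open Scope ring_scope.

(* Vertex states: sS (= 0, susceptible), sI (= 1, infective), sR (= -1, removed). *)
Definition sS : 'I_3 := @Ordinal 3 0 isT.
Definition sI : 'I_3 := @Ordinal 3 1 isT.
Definition sR : 'I_3 := @Ordinal 3 2 isT.

Definition config (n : nat) := {ffun 'I_n -> 'I_3}.
Definition graph (n : nat) := {ffun 'I_n * 'I_n -> bool}.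
(* weights: index j of the value q_j taken by rho(i) *)
Definition weights (n K : nat) := {ffun 'I_n -> 'I_K}.

Section Defs.
Variable R : realType.

Definition upd n (x : config n) (i : 'I_n) (s : 'I_3) : config n :=
  [ffun k => if k == i then s else x k].

Definition ER_law n (p : R) (a : graph n) : R :=
  if [forall i, ~~ a (i, i)] && [forall i, forall j, a (i, j) == a (j, i)]
  then \prod_(ij : 'I_n * 'I_n | (ij.1 < ij.2)%N) (if a ij then p else 1 - p)
  else 0.

Definition weights_law n K (mu : 'I_K -> R) (r : weights n K) : R :=
  \prod_i mu (r i).

Definition init_law n (theta : R) (x : config n) : R :=
  \prod_i (if x i == sI then theta else if x i == sS then 1 - theta else 0).

Definition inf_rate n K (lam : R) (q : 'I_K -> R) (a : graph n) (r : weights n K)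
  (x : config n) (i : 'I_n) : R :=
  lam / n%:R * \sum_(j : 'I_n) (q (r i) * q (r j) *
      (if a (i, j) && (x j == sI) then 1 else 0)).

Definition SIR_off n K lam q (a : graph n) (r : weights n K) (x y : config n) : R :=
  \sum_(i : 'I_n)
    ((if (x i == sS) && (y == upd x i sI) then inf_rate lam q a r x i else 0)
   + (if (x i == sI) && (y == upd x i sR) then 1 else 0)).

Definition SIR_Q n K lam q (a : graph n) (r : weights n K) (x y : config n) : R :=
  if x == y then - \sum_(z | z != x) SIR_off lam q a r x z
  else SIR_off lam q a r x y.

Fixpoint Qpow (C : finType) (Q : C -> C -> R) (k : nat) (x y : C) : R :=
  match k with
  | 0 => if x == y then 1 else 0
  | k'.+1 => \sum_z Qpow Q k' x z * Q z y
  end.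

Definition trans (C : finType) (Q : C -> C -> R) (t : R) (x y : C) : R :=
  limn (fun N => \sum_(k < N) (t ^+ k / (k`!)%:R * Qpow Q k x y)).

Fixpoint fdd_prod (C : finType) (Q : C -> C -> R) (t : R) (x : C)
  (l : seq (R * C)) : R :=
  match l with
  | [::] => 1
  | (s, y) :: l' => trans Q (s - t) x y * fdd_prod Q s y l'
  end.

(* (G, rho, X) on the probability space (Omega, P) is the model of the paper:
   Erdos-Renyi graph, independent i.i.d. weights, independent i.i.d. initial
   states, and, given graph and weights, X is the continuous-time Markov chain
   with the SIR rates (finite-dimensional distributions given by exp(tQ)),
   with cadlag (piecewise constant) paths. *)
Definition is_SIR_model (d : measure_display) (Omega : measurableType d)
  (P : probability Omega R) (n K : nat) (lam p theta : R) (q mu : 'I_K -> R)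
  (G : Omega -> graph n) (rho : Omega -> weights n K)
  (X : Omega -> R -> config n) : Prop :=
  [/\ (forall a, measurable [set w | G w = a]),
      (forall r, measurable [set w | rho w = r]) /\
      (forall t c, measurable [set w | X w t = c]),
      (* cadlag paths with values in a finite set *)
      (forall w s, 0 <= s -> (exists e : R, 0 < e /\
          forall u, s <= u < s + e -> X w u = X w s)),
      (forall w s, 0 < s -> (exists e : R, 0 < e /\
          forall u u', s - e < u < s -> s - e < u' < s -> X w u = X w u')) &
      (forall a r x0 (l : seq (R * config n)),
          path (fun u v => u.1 <= v.1) (0, x0) l ->
          P [set w | [/\ G w = a, rho w = r, X w 0 = x0 &
                        all (fun sy => X w sy.1 == sy.2) l]]
          = (ER_law p a * weights_law mu r * init_law theta x0
             * fdd_prod (SIR_Q lam q a r) 0 x0 l)%:E)].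

Definition S_count n K (q : 'I_K -> R) (r : weights n K) (x : config n) (j : 'I_K) : nat :=
  #|[set i | (x i == sS) && (q (r i) == q j)]|.
Definition I_count n K (q : 'I_K -> R) (r : weights n K) (x : config n) (j : 'I_K) : nat :=
  #|[set i | (x i == sI) && (q (r i) == q j)]|.
(* each edge joining a susceptible and an infective vertex is counted once,
   through the ordered pair (susceptible end, infective end) *)
Definition L_count n K (q : 'I_K -> R) (a : graph n) (r : weights n K) (x : config n)
  (j l : 'I_K) : nat :=
  #|[set ik : 'I_n * 'I_n | [&& a ik, x ik.1 == sS, q (r ik.1) == q j,
                               x ik.2 == sI & q (r ik.2) == q l]]|.

End Defs.

(* Main.v *)
Require Import Defs.
From HB Require Import structures.
From mathcomp Require Import all_boot all_order all_algebra.
From mathcomp Require Import all_classical all_reals all_analysis.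
From mathcomp Require Import ring lra.
Set Implicit Arguments. Unset Strict Implicit. Unset Printing Implicit Defensive.
Import Order.TTheory GRing.Theory Num.Theory.
Local Open Scope classical_set_scope.
Local Open Scope ring_scope.
Section Ineq.
Variable R : realType.

Lemma expR_up (t : R) : `|t| <= 1/2 -> expR t <= 1 + t + 2 * t ^+ 2.
Proof.
move=> ht.
have h1 : 1 - t <= expR (- t) by have := expR_ge1Dx (- t).
have ht1 : 0 < 1 - t by move: ht; rewrite ler_norml; lra.
have e1 : expR t * expR (- t) = 1 by rewrite -expRD subrr expR0.
have : expR t * (1 - t) <= 1.
  by rewrite -[X in _ <= X]e1 ler_pM2l ?expR_gt0.

have h2 : 1 <= (1 - t) * (1 + t + 2 * t ^+ 2).
  have -> : (1 - t) * (1 + t + 2 * t ^+ 2) = 1 + t^+2 * (1 - 2 * t) by ring.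
  rewrite lerDl mulr_ge0 // ?sqr_ge0 //; move: ht; rewrite ler_norml; lra.
move=> h3.
have : expR t * (1 - t) <= (1 + t + 2 * t ^+ 2) * (1 - t) by rewrite mulrC; lra.
by rewrite ler_pM2r.
Qed.

Lemma mgf_bound (p t w : R) : 0 <= p <= 1 -> `|t| <= 1/2 -> (w = 0 \/ w = 1) ->
  p * expR (t * w * (1 - p)) + (1 - p) * expR (t * w * (0 - p)) <= expR (2 * t ^+ 2).
Proof.
move=> hp ht [->|->].
  rewrite !mulr0 ?mul0r ?expR0 !mulr1 subrKC.
  by apply: le_trans (expR_ge1Dx _); rewrite lerDl mulr_ge0 // sqr_ge0.
rewrite !mulr1.
have -> : p * expR (t * (1 - p)) + (1 - p) * expR (t * (0 - p))
   = expR (- (t * p)) * (1 + p * (expR t - 1)).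
  have E1 : expR (t * (1 - p)) = expR t * expR (- (t * p)) by rewrite -expRD; congr expR; ring.
  have E2 : expR (t * (0 - p)) = expR (- (t * p)) by congr expR; ring.
  rewrite E1 E2; ring.
have h1 := expR_up ht.
have h2 : 1 + p * (expR t - 1) <= expR (p * t + p * (2 * t ^+ 2)).
  apply: le_trans (expR_ge1Dx _); rewrite lerD2l -mulrDr ler_wpM2l //; first by case/andP: hp.
  lra.
apply: le_trans (ler_wpM2l (expR_ge0 _) h2) _.
rewrite -expRD ler_expR.
have : p * (2 * t ^+ 2) <= 2 * t ^+ 2.
  by case/andP: hp => hp0 hp1; rewrite ler_piMl // mulr_ge0 // sqr_ge0.
by move=> hh; apply: le_trans hh; rewrite addrA (mulrC t p) addNr add0r.
Qed.
End Ineq.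
Definition upper n (u : 'I_n * 'I_n) : bool := (u.1 < u.2)%N.
Definition symirr n (a : graph n) : bool :=
  [forall i, ~~ a (i, i)] && [forall i, forall j, a (i, j) == a (j, i)].
Definition phi n (f : graph n) : graph n :=
  [ffun u : 'I_n * 'I_n => if (u.1 < u.2)%N then f u else if (u.2 < u.1)%N then f (u.2, u.1) else false].
Definition restr n (a : graph n) : graph n :=
  [ffun u : 'I_n * 'I_n => if upper u then a u else false].

Section Comb.
Variable R : realType.

Lemma sym_split n (F : 'I_n * 'I_n -> R) :
  \sum_u F u = \sum_(u | upper u) (F u + F (u.2, u.1)) + \sum_(u | u.1 == u.2) F u.
Proof.
rewrite (bigID (@upper n)) /= big_split /= -addrA; congr (_ + _).
rewrite (bigID (fun u : 'I_n * 'I_n => u.1 == u.2)) /= addrC; congr (_ + _); last first.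
  apply: eq_bigl => u; rewrite /upper; case: eqP => [->|]; first by rewrite ltnn.
  by rewrite andbF.
have inj : injective (fun u : 'I_n * 'I_n => (u.2, u.1)).
  by move=> [a b] [c d] /= [-> ->].
rewrite (reindex_inj inj) /=.
apply: eq_bigl => -[a b] /=; rewrite /upper /=.
case: ltngtP => //= h; last by rewrite (val_inj h) eqxx.
by apply/eqP => hh; move: h; rewrite hh ltnn.
Qed.

Lemma phi_restr n (a : graph n) : symirr a -> phi (restr a) = a.
Proof.
case/andP => /forallP hirr /forallP hsym; apply/ffunP => -[i j].
rewrite !ffunE /= /upper /=.
case: ltngtP => h //=.
  by have /forallP/(_ i)/eqP := hsym j.
by move: h => /val_inj ->; have := hirr j; case: (a (j, j)).
Qed.

Lemma symirr_phi n (f : graph n) : symirr (phi f).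
Proof.
apply/andP; split; first by apply/forallP => i; rewrite ffunE /= ltnn.
apply/forallP => i; apply/forallP => j; rewrite !ffunE /=.
by case: ltngtP.
Qed.

Lemma phi_upper n (f : graph n) u : upper u -> phi f u = f u.
Proof. by rewrite ffunE /upper => ->. Qed.

Lemma restr_phiE n (f : graph n) :
  (restr (phi f) == f) = (f \in pfamily false (@upper n) (fun _ => predT)).
Proof.
apply/eqP/familyP => [<- u | h].
  rewrite !ffunE /upper /= -[u \in _]/(u.1 < u.2)%N; case: ifP => // _; by rewrite inE.
apply/ffunP => u; rewrite !ffunE /=; have := h u; rewrite /upper /= -[u \in _]/(u.1 < u.2)%N.
case: ifP => // _; by rewrite inE => /eqP ->.
Qed.

Lemma ER_factor (p : R) n (h : 'I_n * 'I_n -> bool -> R) :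
  \sum_a ER_law p a * \prod_(u | upper u) h u (a u)
  = \prod_(u | upper u) (p * h u true + (1 - p) * h u false).
Proof.
transitivity (\sum_(a | symirr a) \prod_(u | upper u)
                  ((if a u then p else 1 - p) * h u (a u))).
  rewrite (bigID (@symirr n)) /= [X in _ + X]big1 ?addr0; last first.
    by move=> a /negbTE ha; rewrite /ER_law -/(symirr a) ha mul0r.
  apply: eq_bigr => a ha; rewrite /ER_law -/(symirr a) ha big_split.
  by [].
transitivity (\prod_(u | upper u) \sum_(x : bool) ((if x then p else 1 - p) * h u x));
  last by apply: eq_bigr => u _; rewrite big_bool.
rewrite (big_distr_big_dep false) /=.
rewrite (reindex_onto (@phi n) (@restr n)) /=; last by move=> a; exact: phi_restr.
apply: eq_big => f; first by rewrite symirr_phi restr_phiE.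
by move=> _; apply: eq_bigr => u hu; rewrite phi_upper.
Qed.
End Comb.
Definition dev (R : pzRingType) (p : R) n (a : graph n) (A B : {set 'I_n}) : R :=
  \sum_u ((u.1 \in A) && (u.2 \in B))%:R * ((a u)%:R - p).

Section Chernoff.
Variable R : realType.

Lemma ER_ge0 (p : R) n (a : graph n) : 0 <= p <= 1 -> 0 <= ER_law p a.
Proof.
case/andP => hp0 hp1; rewrite /ER_law; case: ifP => // _.
by apply: prodr_ge0 => u _; case: (a u); rewrite ?subr_ge0.
Qed.

Lemma dev_sym (p : R) n (a : graph n) (A B : {set 'I_n}) :
  (forall i, i \in A -> i \notin B) -> symirr a ->
  dev p a A B = \sum_(u | upper u)
     ((((u.1 \in A) && (u.2 \in B))%:R + ((u.2 \in A) && (u.1 \in B))%:R)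
       * ((a u)%:R - p)).
Proof.
move=> hAB /andP[_ /forallP hsym]; rewrite /dev sym_split.
rewrite [X in _ + X]big1 ?addr0; last first.
  move=> [i j] /= /eqP ->.
  have -> : (j \in A) && (j \in B) = false.
    by apply/negP => /andP[ha hb]; move: (hAB j ha); rewrite hb.
  by rewrite mul0r.
apply: eq_bigr => -[i j] _ /=.
by have /forallP/(_ j)/eqP -> := hsym i; rewrite mulrDl.
Qed.

Lemma chernoff (p : R) n (A B : {set 'I_n}) (sg s c : R) :
  0 <= p <= 1 -> (forall i, i \in A -> i \notin B) -> (sg = 1 \/ sg = -1) -> 0 <= s <= 1/2 ->
  \sum_(a | c < sg * dev p a A B) ER_law p a
    <= expR (- (s * c)) * expR (2 * s ^+ 2 * (n * n)%:R).
Proof.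
move=> hp hAB hsg /andP[hs0 hs1].
pose t := s * sg.
have ht : `|t| <= 1/2.
  by rewrite /t normrM; case: hsg => ->; rewrite ?normrN normr1 mulr1 ger0_norm.
have ht2 : t ^+ 2 = s ^+ 2 by rewrite /t exprMn; case: hsg => ->; rewrite ?sqrrN expr1n mulr1.
pose w (u : 'I_n * 'I_n) : R :=
  ((u.1 \in A) && (u.2 \in B))%:R + ((u.2 \in A) && (u.1 \in B))%:R.
pose h (u : 'I_n * 'I_n) (x : bool) := expR (t * w u * (x%:R - p)).
apply: (@le_trans _ _ (\sum_a ER_law p a * expR (s * (sg * dev p a A B - c)))).
  rewrite big_mkcond /=; apply: ler_sum => a _; case: ifP => hc.
    apply: ler_peMr; first exact: ER_ge0.
    apply: le_trans (expR_ge1Dx _); rewrite lerDl mulr_ge0 // subr_ge0 ltW //.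
  by rewrite mulr_ge0 ?ER_ge0 ?expR_ge0.
have -> : \sum_a ER_law p a * expR (s * (sg * dev p a A B - c))
   = expR (- (s * c)) * \sum_a ER_law p a * \prod_(u | upper u) h u (a u).
  rewrite mulr_sumr; apply: eq_bigr => a _.
  have [hs|hs] := boolP (symirr a); last first.
    by rewrite /ER_law -/(symirr a) (negbTE hs) !mul0r mulr0.
  rewrite mulrCA; congr (_ * _).
  rewrite /h -expR_sum -expRD dev_sym //; congr expR.
  rewrite mulrBr addrC mulrA mulr_sumr; congr (_ + _); apply: eq_bigr => u _.
  by rewrite /t /w mulrA.
rewrite ler_pM2l ?expR_gt0 // ER_factor.
apply: (@le_trans _ _ (\prod_(u | upper u) expR (2 * s ^+ 2))).
  apply: ler_prod => u _; apply/andP; split.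
    by rewrite addr_ge0 // mulr_ge0 ?expR_ge0 //; case/andP: hp => // ? ?; rewrite subr_ge0.
  rewrite /h -ht2 /= mgf_bound //.
  rewrite /w; case hA1 : (u.1 \in A); case hB2 : (u.2 \in B);
    case hA2 : (u.2 \in A); case hB1 : (u.1 \in B) => /=; rewrite ?add0r ?addr0;
    try by [left | right].
  by exfalso; move: (hAB _ hA1); rewrite hB1.
rewrite -expR_sum ler_expR sumr_const mulr_natr; apply: ler_wpMn2l; first by rewrite mulr_ge0 ?sqr_ge0.
by apply: leq_trans (max_card _) _; rewrite card_prod card_ord.
Qed.
End Chernoff.

Lemma card_sets (T : finType) : #|{set T}| = (2 ^ #|T|)%N.
Proof.
transitivity #|powerset [set: T]%SET|; last by rewrite card_powerset cardsT.
by apply: eq_card => A; rewrite powersetE finset.subsetT.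
Qed.

Definition disj n (A B : {set 'I_n}) : bool := [forall i, (i \in A) ==> (i \notin B)].

Section Union.
Variable R : realType.

Lemma union_sum (I J : finType) (Pr : I -> J -> bool) (f : J -> R) :
  (forall j, 0 <= f j) ->
  \sum_(j | [exists i, Pr i j]) f j <= \sum_i \sum_(j | Pr i j) f j.
Proof.
move=> f0; rewrite (eq_bigr (fun i => \sum_j (if Pr i j then f j else 0)));
  last by move=> i _; rewrite big_mkcond.
rewrite exchange_big /= big_mkcond /=; apply: ler_sum => j _.
case: existsP => [[i hi]|_]; last by apply: sumr_ge0 => i _; case: ifP.
by rewrite (bigD1 i) //= hi lerDl; apply: sumr_ge0 => k _; case: ifP.
Qed.

Lemma two_tail (J : finType) (x : J -> R) (c : R) (f : J -> R) :
  (forall j, 0 <= f j) ->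
  \sum_(j | c < `|x j|) f j <= \sum_(j | c < x j) f j + \sum_(j | c < - x j) f j.
Proof.
move=> f0; rewrite !(big_mkcond (fun j => _ < _)) -big_split /=; apply: ler_sum => j _.
rewrite ltr_normr; case: (c < x j); case: (c < - x j) => //=; rewrite ?addr0 ?add0r ?lerDl //.
Qed.

Lemma bad_bound (p eps c : R) n : 0 <= p <= 1 -> 0 < eps <= 1 -> eps * (n * n)%:R <= c ->
  \sum_(a | [exists AB : {set 'I_n} * {set 'I_n},
              disj AB.1 AB.2 && (c < `|dev p a AB.1 AB.2|)]) ER_law p a
   <= (2 ^ (n + n))%:R * (2 * expR (- (eps ^+ 2 / 8) * (n * n)%:R)).
Proof.
move=> hp /andP[he0 he1] hc.
apply: le_trans (union_sum _ (fun a => ER_ge0 a hp)) _.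
set y := 2 * _.
suff hb : forall AB : {set 'I_n} * {set 'I_n},
   \sum_(a | disj AB.1 AB.2 && (c < `|dev p a AB.1 AB.2|)) ER_law p a <= y.
  apply: le_trans (ler_sum _ (fun i _ => hb i)) _.
  by rewrite sumr_const mulr_natl card_prod card_sets card_ord expnD.
move=> [A B] /=.
have [hd|hd] := boolP (disj A B); last first.
  by rewrite big_pred0 // /y mulr_ge0 ?expR_ge0.
rewrite (eq_bigl (fun a => c < `|dev p a A B|)); last by [].
have hAB : forall i, i \in A -> i \notin B by move=> i; move/forallP: hd => /(_ i)/implyP.
apply: le_trans (two_tail _ _ (fun a => ER_ge0 a hp)) _.
have hs : 0 <= eps / 4 <= 1/2 by apply/andP; split; lra.
have key : forall sg, (sg = 1 \/ sg = -1) ->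
    \sum_(a | c < sg * dev p a A B) ER_law p a <= expR (- (eps ^+ 2 / 8) * (n * n)%:R).
  move=> sg hsg; apply: le_trans (@chernoff _ p n A B sg (eps / 4) c hp hAB hsg hs) _.
  rewrite -expRD ler_expR.
  have hN : 0 <= (n * n)%:R :> R by [].
  have : eps / 4 * (eps * (n * n)%:R) <= eps / 4 * c by rewrite ler_wpM2l //; lra.
  rewrite !expr2; nra.
have k1 : \sum_(a | c < dev p a A B) ER_law p a <= expR (- (eps ^+ 2 / 8) * (n * n)%:R).
  by rewrite (eq_bigl (fun a => c < 1 * dev p a A B)) ?key //; [left | move=> a; rewrite mul1r].
have k2 : \sum_(a | c < - dev p a A B) ER_law p a <= expR (- (eps ^+ 2 / 8) * (n * n)%:R).
  by rewrite (eq_bigl (fun a => c < -1 * dev p a A B)) ?key //; [right | move=> a; rewrite mulN1r].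
rewrite /y; lra.
Qed.
End Union.

Section Small.
Variable R : realType.

Lemma bound_small (e : R) : 0 < e ->
  exists N, forall n, (N <= n)%N ->
    (2 ^ (n + n))%:R * (2 * expR (- (e ^+ 2 / 8) * (n * n)%:R)) <= 2 * (n.+1%:R)^-1.
Proof.
move=> he; set k := e ^+ 2 / 8.
have hk : 0 < k by rewrite /k divr_gt0 // exprn_gt0.
exists (Num.Def.archi_bound (4 / k)) => n hn.
have hnk : 4 <= k * n%:R.
  have h1 := archi_boundP (ltW (divr_gt0 (ltr0Sn _ 3) hk)).
  have h2 : (Num.Def.archi_bound (4 / k))%:R <= n%:R :> R by rewrite ler_nat.
  have : 4 / k <= n%:R by lra.
  by rewrite ler_pdivrMr // mulrC.
have h2 : (2 ^ (n + n))%:R <= expR ((n + n)%:R) :> R.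
  rewrite natrX -[(n + n)%:R]mulr1 expRM_natl.
  apply: lerXn2r; rewrite ?nnegrE ?expR_ge0 //.
  by have := expR_ge1Dx (1 : R).
have hn0 : 0 <= n%:R :> R by [].
have h3 : expR ((n + n)%:R) * expR (- k * (n * n)%:R) <= expR (- n%:R) :> R.
  rewrite -expRD ler_expR natrD natrM.
  have : 4 * n%:R <= k * n%:R * n%:R :> R by rewrite ler_wpM2r.
  lra.
have h4 : expR (- n%:R) <= (n.+1%:R)^-1 :> R.
  rewrite expRN lef_pV2 ?posrE ?expR_gt0 ?ltr0Sn // -nat1r.
  exact: expR_ge1Dx.
rewrite mulrCA ler_pM2l //.
apply: le_trans h4; apply: le_trans h3.
by rewrite ler_wpM2r ?expR_ge0.
Qed.
End Small.

Definition Aset (R : realType) n K (q : 'I_K -> R) (r : weights n K) (x : config n)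
  (j : 'I_K) (s : 'I_3) : {set 'I_n} := [set i | (x i == s) && (q (r i) == q j)]%SET.

Section Link.
Variable R : realType.

Lemma in_cset (T : eqType) (Pr : pred T) u : (u \in [set x | Pr x]) = Pr u.
Proof. by apply/idP/idP => [/set_mem|/mem_set]. Qed.

Lemma sum_ind (T : finType) (b : pred T) : \sum_i ((b i)%:R : R) = #|b|%:R.
Proof.
rewrite -sum1_card natr_sum [RHS]big_mkcond /=; apply: eq_bigr => i _.
by rewrite -[i \in b]/(b i); case: (b i).
Qed.

Lemma count_dev (p : R) n K (q : 'I_K -> R) (a : graph n) (r : weights n K)
  (x : config n) j l :
  (L_count q a r x j l)%:R - p * (S_count q r x j)%:R * (I_count q r x l)%:R
  = dev p a (Aset q r x j sS) (Aset q r x l sI).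
Proof.
rewrite /dev (eq_bigr (fun u : 'I_n * 'I_n => ((a u && (u.1 \in Aset q r x j sS) && (u.2 \in Aset q r x l sI)))%:R
     - p * ((u.1 \in Aset q r x j sS) && (u.2 \in Aset q r x l sI))%:R)); last first.
  move=> u _; rewrite mulrBr -natrM mulnb mulrC; congr (_%:R - _).
  by rewrite andbC andbA.
rewrite sumrB -mulr_sumr sum_ind; congr (_ - _).
  congr (_%:R); apply: eq_card => u; rewrite in_cset [in RHS]unfold_in /Aset !finset.in_set -!andbA //.
rewrite -mulrA; congr (_ * _).
rewrite -(pair_big predT predT (fun i k => ((i \in Aset q r x j sS) && (k \in Aset q r x l sI))%:R)) /=.
rewrite (eq_bigr (fun i => (i \in Aset q r x j sS)%:R * \sum_k (k \in Aset q r x l sI)%:R)); last first.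
  by move=> i _; rewrite mulr_sumr; apply: eq_bigr => k _; rewrite -natrM mulnb.
rewrite -mulr_suml !sum_ind; congr (_%:R * _%:R); apply: eq_card => i;
  by rewrite in_cset [in RHS]unfold_in /Aset !finset.in_set.
Qed.
End Link.

Section MeasLemmas.
Variable R : realType.

Lemma measure_bigsetU_le d (T : measurableType d) (mu : {measure set T -> \bar R})
  (I : Type) (r : seq I) (Pr : pred I) (F : I -> set T) :
  (forall i, measurable (F i)) ->
  (mu (\big[setU/set0]_(i <- r | Pr i) F i) <= \sum_(i <- r | Pr i) mu (F i))%E.
Proof.
move=> hF; elim: r => [|i r IH]; first by rewrite !big_nil measure0.
rewrite !big_cons; case: ifP => _ //.
apply: le_trans (measureU2 _ (hF i) (bigsetU_measurable _ _)) _.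
  by move=> k _; apply: hF.
by rewrite leeD2l.
Qed.

Lemma mem_bigsetU (T : finType) (U : Type) (Pr : pred T) (F : T -> set U) (w : U) :
  (w \in \big[setU/set0]_(z | Pr z) F z) = `[< exists2 z, Pr z & F z w >].
Proof.
apply/idP/idP.
  move=> /set_mem; rewrite -bigcup_seq_cond => -[z /andP[_ hz] hw].
  by apply/asboolP; exists z.
move=> /asboolP[z hz hw]; apply: mem_set; rewrite -bigcup_seq_cond.
by exists z => //=; rewrite mem_index_enum hz.
Qed.

Lemma weights_sum n K (mu : 'I_K -> R) : \sum_j mu j = 1 ->
  \sum_(r : {ffun 'I_n -> 'I_K}) weights_law mu r = 1.
Proof.
move=> h; rewrite /weights_law -(bigA_distr_bigA (fun (i : 'I_n) (j : 'I_K) => mu j)) /=.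
by rewrite big1 // => i _; rewrite h.
Qed.

Lemma init_sum n (theta : R) :
  \sum_(x : {ffun 'I_n -> 'I_3}) init_law theta x = 1.
Proof.
rewrite /init_law -(bigA_distr_bigA (fun (i : 'I_n) (s : 'I_3) =>
   if s == sI then theta else if s == sS then 1 - theta else 0)) /=.
rewrite big1 // => i _.
by rewrite !big_ord_recl big_ord0 /= !addr0 subrK.
Qed.
End MeasLemmas.

Section PerN.
Variable R : realType.

Lemma per_n (lam p theta eps t : R) (K : nat) (q mu : 'I_K -> R)
  (d : measure_display) (Om : measurableType d) (Pn : probability Om R) (n : nat)
  (Gn : Om -> graph n) (rn : Om -> weights n K) (Xn : Om -> R -> config n)
  (j l : 'I_K) :
  0 <= p <= 1 -> 0 < eps -> 0 <= t -> \sum_j mu j = 1 -> (0 < n)%N ->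
  is_SIR_model Pn lam p theta q mu Gn rn Xn ->
  (Pn [set w | (
      sup [set `| (L_count q (Gn w) (rn w) (Xn w u) j l)%:R
                  - p * (S_count q (rn w) (Xn w u) j)%:R
                      * (I_count q (rn w) (Xn w u) l)%:R |
           | u in `[0, t]] / (n ^ 2)%:R > eps)%R]
   <= ((2 ^ (n + n))%:R * (2 * expR (- (Num.min eps 1 ^+ 2 / 8) * (n * n)%:R)))%:E)%E.
Proof.
move=> hp heps ht0 hmu hn [hGm [hrm hXm] hcad _ hlaw].
set E := [set w | _].
pose Vf (z : graph n * {ffun 'I_n -> 'I_K} * config n) : R :=
  `| (L_count q z.1.1 z.1.2 z.2 j l)%:R - p * (S_count q z.1.2 z.2 j)%:R
       * (I_count q z.1.2 z.2 l)%:R |.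
pose V w u := Vf (Gn w, rn w, Xn w u).
pose c := eps * (n ^ 2)%:R.
have hN : 0 < (n ^ 2)%:R :> R by rewrite ltr0n expn_gt0 hn.
have hEex : forall w, E w <-> exists2 u, 0 <= u <= t & c < V w u.
  move=> w; rewrite /E /=.
  set S := (X in sup X).
  have S0 : S !=set0.
    exists (V w 0); exists 0 => //; by rewrite /= in_itv /= lexx ht0.
  have hub : has_ubound S.
    exists (\sum_(x : config n) Vf (Gn w, rn w, x)) => y [u _ <-].
    rewrite (bigD1 (Xn w u)) //= lerDl; apply: sumr_ge0 => x _; exact: normr_ge0.
  rewrite ltr_pdivlMr //; split.
    move=> /(sup_gt S0) [y [u hu <-] hy]; exists u; last exact: hy.
    by move: hu; rewrite /= in_itv.
  move=> [u hu hc]; apply: lt_le_trans hc _.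
  have hx : S (V w u) by exists u => //; rewrite /= in_itv.
  exact: (ub_le_sup hub hx).
pose Tv (v : R) := \big[setU/set0]_(z | c < Vf z)
  ([set w | Gn w = z.1.1] `&` [set w | rn w = z.1.2] `&` [set w | Xn w v = z.2]).
have hTv : forall v w, Tv v w <-> c < V w v.
  move=> v w; split.
    move=> /mem_set; rewrite mem_bigsetU => /asboolP [[[a r] x] /= hz [[h1 h2] h3]].
    by rewrite /V h1 h2 h3.
  move=> h; apply: set_mem; rewrite mem_bigsetU; apply/asboolP.
  by exists (Gn w, rn w, Xn w v).
have hTm : forall v, measurable (Tv v).
  move=> v; apply: bigsetU_measurable => z _.
  by apply: measurableI; [apply: measurableI|].
pose M := \bigcup_(qq : rat) (if (0 <= (ratr qq : R)) && (ratr qq <= t) then Tv (ratr qq) else set0)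
   `|` Tv t.
have hEM : E = M.
  apply/seteqP; split => w.
    move=> /hEex [u /andP[hu0 hut] hc].
    have [eut|hne] := eqVneq u t; first by right; apply/hTv; rewrite -eut.
    have hlt : u < t by rewrite lt_neqAle hne hut.
    have [e0 [he0 hX]] := hcad w u hu0.
    have : u < Num.min (u + e0) t by rewrite lt_min hlt ltrDl he0.
    move=> /rat_in_itvoo [qq]; rewrite in_itv /= => /andP[h1 h2].
    move: h2; rewrite lt_min => /andP[h2 h3].
    left; exists qq => //.
    have hq0 : 0 <= ratr qq :> R by apply: le_trans hu0 (ltW h1).
    rewrite hq0 (ltW h3) /=; apply/hTv.
    by rewrite /V (hX (ratr qq)) // (ltW h1) h2.
  move=> [[qq _]|]; last by move/hTv => hc; apply/hEex; exists t => //; rewrite ht0 lexx.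
  case: ifP => // /andP[h1 h2] /hTv hc; apply/hEex; exists (ratr qq) => //.
  by rewrite h1 h2.
have hEm : measurable E.
  rewrite hEM; apply: measurableU => //.
  by apply: bigcupT_measurable_rat => qq; case: ifP.
pose Bad (a : graph n) := [exists AB : {set 'I_n} * {set 'I_n},
   disj AB.1 AB.2 && (c < `|dev p a AB.1 AB.2|)].
pose Tri (z : graph n * {ffun 'I_n -> 'I_K} * config n) :=
  [set w | [/\ Gn w = z.1.1, rn w = z.1.2, Xn w 0 = z.2
            & all (fun sy : R * config n => Xn w sy.1 == sy.2) [::]]].
have hTri : forall z, measurable (Tri z).
  move=> z; have -> : Tri z = [set w | Gn w = z.1.1] `&` [set w | rn w = z.1.2]
                         `&` [set w | Xn w 0 = z.2].
    by apply/seteqP; split => w /=; [move=> [h1 h2 h3 _] | move=> [[h1 h2] h3]].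
  by apply: measurableI; [apply: measurableI|].
have hsub : E `<=` \big[setU/set0]_(z | Bad z.1.1) Tri z.
  move=> w /hEex [u hu hc]; apply: set_mem; rewrite mem_bigsetU; apply/asboolP.
  exists (Gn w, rn w, Xn w 0) => //=.
  apply/existsP; exists (Aset q (rn w) (Xn w u) j sS, Aset q (rn w) (Xn w u) l sI) => /=.
  apply/andP; split; last by rewrite -count_dev.
  apply/forallP => i; apply/implyP; rewrite /Aset !finset.in_set => /andP[/eqP h _].
  by rewrite h.
have hle : (Pn E <= Pn (\big[setU/set0]_(z | Bad z.1.1) Tri z))%E.
  apply: le_measure => //; rewrite inE //; exact: bigsetU_measurable.
apply: le_trans hle _.
apply: le_trans (measure_bigsetU_le _ _ _ hTri) _.
rewrite (eq_bigr (fun z => (ER_law p z.1.1 * @weights_law R n K mu z.1.2 * @init_law R n theta z.2)%:E));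
  last first.
  move=> [[a r] x] _; have h := hlaw a r x [::] isT; rewrite /= mulr1 in h.
  rewrite -h; congr (Pn _); apply/seteqP; split => w //=.
rewrite (sumEFin _ (fun z => Bad z.1.1)
   (fun z => ER_law p z.1.1 * @weights_law R n K mu z.1.2 * @init_law R n theta z.2)) lee_fin.
have hsumE : \sum_(z | Bad z.1.1) ER_law p z.1.1 * @weights_law R n K mu z.1.2 * @init_law R n theta z.2
    = \sum_(a | Bad a) ER_law p a.
  transitivity (\sum_a \sum_(r : {ffun 'I_n -> 'I_K}) \sum_(x : config n)
     (if Bad a then ER_law p a * @weights_law R n K mu r * @init_law R n theta x else 0)).
    rewrite pair_big /= pair_big /= big_mkcond /=.
    by [].
  rewrite [RHS]big_mkcond; apply: eq_bigr => a _; case: ifP => _; last first.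
    by rewrite big1 // => r _; rewrite big1.
  rewrite -[RHS]mulr1 -(weights_sum n hmu) mulr_sumr; apply: eq_bigr => r _.
  rewrite -[RHS]mulr1 -(init_sum n theta) mulr_sumr; apply: eq_bigr => x _.
  by [].
rewrite hsumE; apply: bad_bound => //.
  by rewrite lt_min heps ltr01 /= ge_min lexx orbT.
have hnn : (n * n)%:R = (n ^ 2)%:R :> R by rewrite natrX expr2 -natrM.
rewrite /c -hnn; apply: ler_wpM2r => //.
by rewrite ge_min lexx.
Qed.
End PerN.

Unset Implicit Arguments.

Theorem corollary3p3 (R : realType) (lam p theta M1 : R) (K : nat)
  (q mu : 'I_K -> R)
  (d : measure_display) (Omega : nat -> measurableType d)
  (P : forall n, probability (Omega n) R)
  (G : forall n, Omega n -> graph n)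
  (rho : forall n, Omega n -> weights n K)
  (X : forall n, Omega n -> R -> config n) :
  0 < lam -> 0 < p < 1 -> 0 < theta < 1 ->
  injective q ->
  (forall j, 0 <= q j <= M1) ->
  (forall j, 0 < mu j) -> \sum_j mu j = 1 ->
  (forall n, (0 < n)%N ->
     is_SIR_model (P n) lam p theta q mu (G n) (rho n) (X n)) ->
  forall (j l : 'I_K) (t : R), 0 <= t ->
  forall eps : R, 0 < eps ->
  (fun n => P n [set w |
      sup [set `| (L_count q (G n w) (rho n w) (X n w u) j l)%:R
                  - p * (S_count q (rho n w) (X n w u) j)%:R
                      * (I_count q (rho n w) (X n w u) l)%:R |
           | u in `[0, t]] / (n ^ 2)%:R > eps]) @ \oo --> 0%E.
Proof.
move=> hlam /andP[hp0 hp1] htheta qinj hq hmu0 hmu hmodel j l t ht0 eps heps.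
have hp : 0 <= p <= 1 by rewrite !ltW.
have he : 0 < Num.min eps 1 by rewrite lt_min heps ltr01.
have [N hN] := bound_small he.
apply: (@squeeze_cvge _ _ _ _ (fun=> 0%E) _ (fun n => (2 * (n.+1%:R)^-1)%:E)).
- exists (maxn N 1) => // n /= hn.
  have hn1 : (0 < n)%N by apply: leq_trans hn; rewrite leq_maxr.
  have hnN : (N <= n)%N by apply: leq_trans hn; rewrite leq_maxl.
  apply/andP; split; first exact: measure_ge0.
  apply: le_trans (per_n j l hp heps ht0 hmu hn1 (hmodel n hn1)) _.
  by rewrite lee_fin; exact: hN.
- exact: cvg_cst.
- apply: cvg_EFin; first by near=> n.
  have := @cvgMl_tmp R nat _ _ _ 2 _ (@cvg_harmonic R); rewrite mulr0.
  by move=> h; apply: h; exact: eventually_filter.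
Unshelve. all: by end_near.
Qed.
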